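(* Let $\mathbb{N}$ be a directed graph on vertices $\{1,\dots,m\}$ and let $\mathcal{J}$ be the set of its arcs, written as double indices $ij$ (meaning the arc from $j$ to $i$), i.e. $\mathcal{J}=\{ij: i\in\{1,\dots,m\},\ j\in\bar{\mathcal{N}}_i\}$ where $\bar{\mathcal{N}}_i$ is the set of $j\neq i$ with an arc from $j$ to $i$. For $ij\in\mathcal{J}$ let $c_{ij}\in\mathbb{R}^{1\times m}$ have entry $-1$ in position $i$, $+1$ in position $j$ and zeros elsewhere, and let $b_i$ be the $i$-th unit vector of $\mathbb{R}^m$. Let $\mathbb{G}$ be the directed graph with vertex set $\mathcal{J}$ and an arc from vertex $ij$ to vertex $kq$ whenever $c_{kq}(sI)^{-1}b_i\neq 0$ (equivalently $c_{kq}b_i\neq 0$). If $\mathbb{N}$ is strongly connected, then $\mathbb{G}$ is strongly connected.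
   Context: $c_{ij}$ is the row of the transpose of the incidence matrix of $\mathbb{N}$ corresponding to the arc from $j$ to $i$. *)

(* Defs.v *)
From mathcomp Require Import all_boot all_order all_algebra.
From mathcomp Require Import reals.
Set Implicit Arguments. Unset Strict Implicit. Unset Printing Implicit Defensive.
Import Order.TTheory GRing.Theory Num.Theory.
Local Open Scope ring_scope.

(* A directed graph on vertices 'I_m is a relation e : rel 'I_m,
   where  e j i  means there is an arc from j to i. *)

Definition strongly_connected (T : finType) (r : rel T) : Prop :=
  forall x y : T, connect r x y.

(* Nbar_i = { j <> i | arc from j to i }; the arc set J consists of the
   double indices ij = (i, j) with j in Nbar_i. *)
Definition in_J (m : nat) (e : rel 'I_m) (p : 'I_m * 'I_m) : bool :=
  (p.2 != p.1) && e p.2 p.1.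

Definition arcs (m : nat) (e : rel 'I_m) : finType :=
  {p : 'I_m * 'I_m | in_J e p}.

Definition cvec (R : realType) (m : nat) (i j : 'I_m) : 'rV[R]_m :=
  \row_k ((k == j)%:R - (k == i)%:R).

Definition bvec (R : realType) (m : nat) (i : 'I_m) : 'cV[R]_m :=
  \col_k (k == i)%:R.

Definition Grel (R : realType) (m : nat) (e : rel 'I_m) : rel (arcs e) :=
  fun x y => (cvec R (val y).1 (val y).2 *m bvec R (val x).1) != 0.
Arguments Grel R {m} e _ _.

(* Main.v *)
Require Import Defs.
From mathcomp Require Import all_boot all_order all_algebra.
From mathcomp Require Import reals.
Import Order.TTheory GRing.Theory Num.Theory.
Local Open Scope ring_scope.

Lemma Grel_step (R : realType) (m : nat) (e : rel 'I_m) (x y : arcs e) :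
  ((val x).1 == (val y).1) || ((val x).1 == (val y).2) -> Grel R e x y.
Proof.
case: y => [[k q] Jy] H; rewrite /= in H.
have qk : q != k by move: (Jy) => /andP [].
rewrite /Grel /=; apply/eqP => /matrixP /(_ 0 0).
rewrite !mxE (bigD1 (val x).1) //= big1 ?addr0; last first.
  by move=> l /negbTE Hl; rewrite !mxE Hl mulr0.
rewrite !mxE eqxx mulr1 => /eqP; rewrite subr_eq0.
rewrite eqr_nat.
case/orP: H => /eqP E; have E' : (sval x).1 = _ := E; rewrite E' eqxx;
  [rewrite eq_sym in qk|]; by rewrite (negbTE qk).
Qed.

Definition Qr (R : realType) (m : nat) (e : rel 'I_m) (x : arcs e) (v : 'I_m) :=
  exists z : arcs e, (val z).1 = v /\ connect (Grel R e) x z.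

Arguments Qr R {m e} x v.

Lemma step_l (R : realType) (m : nat) (e : rel 'I_m) (x : arcs e) v (z : arcs e) :
  Qr R x v -> ((val z).1 == v) || ((val z).2 == v) -> connect (Grel R e) x z.
Proof.
move=> [w [Ew Hw]] Hz; apply: connect_trans Hw (connect1 _).
apply: Grel_step; rewrite Ew eq_sym (eq_sym v); exact: Hz.
Qed.

Lemma arc_l (R : realType) (m : nat) (e : rel 'I_m) (x : arcs e) (v w : 'I_m) :
  Qr R x v -> e v w -> Qr R x w.
Proof.
move=> Qv evw.
have [Ewv|wv] := eqVneq w v; first by rewrite Ewv; exact: Qv.
have Jz : in_J e (w, v) by rewrite /in_J /= eq_sym wv evw.
exists (exist _ (w, v) Jz); split; first reflexivity.
apply: (@step_l R m e x v _ Qv); rewrite /= eqxx orbT; reflexivity.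
Qed.

Lemma path_l (R : realType) (m : nat) (e : rel 'I_m) (x : arcs e) :
  forall p v, path e v p -> Qr R x v -> Qr R x (last v p).
Proof.
elim=> [|w p IH] v /=; first by move=> _ Qv; exact: Qv.
move=> /andP [evw pw] Qv; apply: IH; first exact: pw.
exact: arc_l Qv evw.
Qed.

Theorem lemma1 (R : realType) (m : nat) (e : rel 'I_m) :
  strongly_connected e -> strongly_connected (Grel R e).
Proof.
move=> sc x y.
have base : Qr R x (val x).1.
  exists x; split; [reflexivity | exact: connect0].
case/connectP: (sc (val x).1 (val y).2) => p Hp Hl.
apply: (@step_l R m e x (val y).2); last by rewrite eqxx orbT.
rewrite Hl; exact: path_l Hp base.
Qed.
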